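(* Let $k\in[n-1]$ and $w\in S_n^{k\searrow}$. Let $C_1$ be an increasing $k$-chain from $u$ to $v$ and $C_2$ an increasing $1$-chain from $v$ to $w$. Apply Lenart's growth diagram to $(k,1,C_1,C_2)$, obtaining a saturated $1$-chain $C_2'$ from $u$ to some $v'$ and a saturated $k$-chain $C_1'$ from $v'$ to $w$. Then $C_2'$ is an increasing $1$-chain and $C_1'$ is an increasing $k$-chain.
   Context: Permutations in one-line notation; $wt_{i,j}$ is $w$ with positions $i<j$ swapped; $\ell$ the number of inversions. $u\lessdot w$ iff $w=ut_{i,j}$, $i<j$, $\ell(w)=\ell(u)+1$; $u\lessdot_k w$ iff moreover $i\le k<j$. A saturated $k$-chain is $v_1\lessdot_k\cdots\lessdot_k v_d$ ($d\ge1$), of length $d-1$; it is increasing if the smaller of the two values exchanged at each step strictly increases along the chain. $S_n^{k\searrow}=\{v:v(k+1)>\dots>v(n)\}$. Lenart's growth diagram: given $k_1,k_2\in[n-1]$, a saturated $k_1$-chain $C_1$ from $u$ to $v$ and a saturated $k_2$-chain $C_2$ from $v$ to $w$, write the concatenated chain with each step labelled $k_1$ or $k_2$. A local move applies to a segment $a\xrightarrow{k_1}b\xrightarrow{k_2}c$ (with $a\lessdot_{k_1}b\lessdot_{k_2}c$): there is a unique $b'\ne b$ with $a\lessdot b'\lessdot c$; if $a\lessdot_{k_2}b'\lessdot_{k_1}c$, replace the segment by $a\xrightarrow{k_2}b'\xrightarrow{k_1}c$; otherwise (then $a\lessdot_{k_2}b\lessdot_{k_1}c$) replace it by $a\xrightarrow{k_2}b\xrightarrow{k_1}c$.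 Apply local moves until all $k_2$-labelled steps precede all $k_1$-labelled steps; the output is the resulting saturated $k_2$-chain from $u$ to some $v'$ (same length as $C_2$) and saturated $k_1$-chain from $v'$ to $w$ (same length as $C_1$). The output does not depend on the order of moves. *)

(* Defs.v *)
(* Permutations of [n] are modelled as 'S_n = {perm 'I_n};
   positions and values are 0-based ordinals (paper: 1-based). *)
From mathcomp Require Import all_boot all_fingroup.
From Stdlib Require Import Relations.
Set Implicit Arguments. Unset Strict Implicit. Unset Printing Implicit Defensive.

Section Defs.
Variable n : nat.

(* w t_{i,j}: w with positions i and j swapped, i.e. (w t_{ij})(p) = w (t_{ij} p).
   In mathcomp (s * t) x = t (s x), hence tperm i j * w. *)
Definition swp (w : 'S_n) (i j : 'I_n) : 'S_n := (tperm i j * w)%g.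

Definition ell (w : 'S_n) : nat :=
  #|[set p : 'I_n * 'I_n | (p.1 < p.2) && (w p.2 < w p.1)]|.

Definition covers (u w : 'S_n) : Prop :=
  exists i j : 'I_n, i < j /\ w = swp u i j /\ ell w = (ell u).+1.

(* u <._k w : additionally i <= k < j in 1-based positions, i.e.
   i' < k <= j' for the 0-based positions i' = i-1, j' = j-1. *)
Definition kcovers (k : nat) (u w : 'S_n) : Prop :=
  exists i j : 'I_n, [/\ i < j, i < k <= j, w = swp u i j & ell w = (ell u).+1].

(* saturated k-chain x = v_1 <._k v_2 <._k ... (the chain is x :: s) *)
Fixpoint sat_kchain (k : nat) (x : 'S_n) (s : seq 'S_n) : Prop :=
  match s with
  | [::] => True
  | y :: s' => kcovers k x y /\ sat_kchain k y s'
  end.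

(* the smaller of the two values exchanged in the step a -> b *)
Definition smallval (a b : 'S_n) : nat :=
  \big[minn/n]_(p : 'I_n | a p != b p) (a p : nat).

Fixpoint step_vals (x : 'S_n) (s : seq 'S_n) : seq nat :=
  match s with
  | [::] => [::]
  | y :: s' => smallval x y :: step_vals y s'
  end.

Definition incr_kchain (k : nat) (x : 'S_n) (s : seq 'S_n) : Prop :=
  sat_kchain k x s /\ sorted ltn (step_vals x s).

(* w in S_n^{k\searrow}: w(k+1) > ... > w(n) (1-based), i.e. positions k..n-1 0-based *)
Definition dec_tail (k : nat) (w : 'S_n) : Prop :=
  forall p q : 'I_n, k <= p -> p < q -> w q < w p.

(* Labelled chains for Lenart's growth diagram: start x0 (fixed) followed by
   steps (lab, y); lab = false means label k1 (first chain), lab = true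
   means label k2 (second chain). *)
Definition lchain := seq (bool * 'S_n).

Inductive gd_move (k1 k2 : nat) (x0 : 'S_n) : lchain -> lchain -> Prop :=
| GDmove (pre post : lchain) (b c b'' : 'S_n) :
    kcovers k1 (last x0 (map snd pre)) b ->
    kcovers k2 b c ->
    ( (b'' != b /\ covers (last x0 (map snd pre)) b'' /\ covers b'' c /\
       kcovers k2 (last x0 (map snd pre)) b'' /\ kcovers k1 b'' c)
      \/
      (b'' = b /\
       forall b' : 'S_n, b' != b -> covers (last x0 (map snd pre)) b' -> covers b' c ->
         ~ (kcovers k2 (last x0 (map snd pre)) b' /\ kcovers k1 b' c)) ) ->
    gd_move k1 k2 x0 (pre ++ (false, b) :: (true, c) :: post)
                     (pre ++ (true, b'') :: (false, c) :: post).

Definition concat_lchain (s1 s2 : seq 'S_n) : lchain :=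
  [seq (false, x) | x <- s1] ++ [seq (true, x) | x <- s2].

End Defs.

(* Main.v *)
Require Import Defs.
From mathcomp Require Import all_boot all_fingroup.
From Stdlib Require Import Relations.
From mathcomp Require Import zify.
Set Implicit Arguments. Unset Strict Implicit. Unset Printing Implicit Defensive.

Lemma swpE n (a : 'S_n) i j m : swp a i j m = a (tperm i j m).
Proof. by rewrite /swp permM. Qed.

Lemma swpK n (a : 'S_n) i j : swp (swp a i j) i j = a.
Proof. by rewrite /swp mulgA tperm2 mul1g. Qed.

Ltac tpc := match goal with |- context [fun_of_perm (tperm ?x ?y) ?z] =>
  lazymatch z with context [fun_of_perm (tperm _ _) _] => fail | _ =>
  let H := fresh "H" in let H' := fresh "H" in
  case: (tpermP x y z) => [H|H|H H']; try subst end end.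

Ltac ordlia := repeat match goal with
 | H : @eq _ _ _ |- _ => move/(congr1 (@nat_of_ord _)): H => H
 | H : not (@eq _ _ _) |- _ => move/(contra_not (@ord_inj _ _ _)): H => H
 | |- @eq _ _ _ => apply: ord_inj
 end; lia.

Ltac tpsolve := repeat (first [progress rewrite ?tpermL ?tpermR | tpc]); intros; try ordlia.

Lemma ell_inc n (a : 'S_n) (i j : 'I_n) : i < j -> a i < a j -> ell a < ell (swp a i j).
Proof.
move=> lij aij; rewrite /ell.
set A := [set p | _]; set B := [set p | _].
pose t := tperm i j.
pose f := fun p : 'I_n * 'I_n => if t p.1 < t p.2 then (t p.1, t p.2) else p.
have tK : forall x, t (t x) = x by move=> x; rewrite tpermK.
have fA : {in A &, injective f}.
  move=> [r1 s1] [r2 s2]; rewrite !inE /= /f /= => /andP[l1 _] /andP[l2 _].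
  case: ifP => c1; case: ifP => c2 [e1 e2].
  - by rewrite -(tK r1) e1 tK -(tK s1) e2 tK.
  - by move: c2; rewrite -e1 -e2 !tK l1.
  - by move: c1; rewrite e1 e2 !tK l2.
  - by rewrite e1 e2.
have sub : [set f x | x in A] \subset B :\ (i, j).
  apply/subsetP => q /imsetP [[r s]]; rewrite !inE /= => /andP [lrs ars] ->.
  rewrite /f /=; case: ifP => c.
  - rewrite /= !swpE !tK ars c !andbT; apply/eqP => -[e1 e2].
    move: lrs; rewrite -(tK r) -(tK s) e1 e2 /t tpermL tpermR => h.
    by move: (ltn_trans h lij); rewrite ltnn.
  - rewrite lrs /= !swpE.
    have ne : (r, s) != (i, j).
      apply/eqP => -[er es]; subst r s; by move: ars; rewrite ltnNge ltnW.
    rewrite ne /=. move: c; rewrite /t.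
    case: (tpermP i j r) => [er|er|er1 er2]; case: (tpermP i j s) => [es|es|es1 es2]; subst => //=.
    all: try (move=> h; lia).
have ijB : (i, j) \in B by rewrite inE /= lij !swpE tpermL tpermR aij.
rewrite -(card_in_imset fA) (cardsD1 (i, j) B) ijB add1n ltnS.
exact: subset_leq_card.
Qed.

Lemma cover_lt n (a : 'S_n) (i j : 'I_n) :
  i < j -> ell (swp a i j) = (ell a).+1 -> a i < a j.
Proof.
move=> lij e; case: (ltngtP (a i) (a j)) => // h.
- have := ell_inc (a := swp a i j) lij; rewrite !swpE tpermL tpermR swpK => /(_ h).
  by rewrite e ltnNge leqnSn.
- by move/perm_inj: (val_inj h) => eij; move: lij; rewrite eij ltnn.
Qed.

Lemma swp3 n (a : 'S_n) (i m j : 'I_n) : i < m -> m < j ->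
  swp (swp (swp a i m) m j) i m = swp a i j.
Proof.
move=> lim lmj; apply/permP => x; rewrite !swpE; congr (a _).
tpsolve.
Qed.

Lemma cover_noint n (a : 'S_n) (i j m : 'I_n) :
  i < j -> ell (swp a i j) = (ell a).+1 -> i < m -> m < j -> a i < a m -> a m < a j -> False.
Proof.
move=> lij e lim lmj h1 h2.
have e1 := ell_inc lim h1.
have tj : tperm i m j = j by tpsolve.
have ti : tperm m j i = i by tpsolve.
have e2 : ell (swp a i m) < ell (swp (swp a i m) m j).
  by apply: ell_inc => //; rewrite !swpE tpermR tj; apply: ltn_trans h1 h2.
have e3 : ell (swp (swp a i m) m j) < ell (swp (swp (swp a i m) m j) i m).
  by apply: ell_inc => //; rewrite !swpE ti tpermL tpermL tj.
move: e3; rewrite swp3 // e; lia.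
Qed.

Lemma bigmin2 n (l : seq 'I_n) (F : 'I_n -> nat) (i j : 'I_n) : i != j -> uniq l ->
  (forall p, F p <= n) ->
  \big[minn/n]_(p <- l | (p == i) || (p == j)) F p =
  minn (if i \in l then F i else n) (if j \in l then F j else n).
Proof.
move=> nij; have nji : j != i by rewrite eq_sym.
elim: l => [|x l IH] /=; first by rewrite big_nil /= minnn.
move=> /andP [xl ul] Fn; rewrite big_cons IH // !inE.
have := Fn i; have := Fn j.
case: (eqVneq x i) => [exi|nxi] /=.
- subst x; rewrite ?eqxx ?(negbTE nij) ?(negbTE nji) ?(negbTE xl) /=.
  case: (j \in l); lia.
- case: (eqVneq x j) => [exj|nxj] /=.
  + subst x; rewrite ?eqxx ?(negbTE nij) ?(negbTE nji) ?(negbTE xl) /=.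
    case: (i \in l); lia.
  + by [].
Qed.

Lemma smallval_swp n (a : 'S_n) (i j : 'I_n) : i != j ->
  smallval a (swp a i j) = minn (a i) (a j).
Proof.
move=> nij; rewrite /smallval.
rewrite (eq_bigl (fun p => (p == i) || (p == j))); last first.
  move=> p /=; rewrite swpE.
  case: (tpermP i j p) => [->|->|/eqP np1 /eqP np2].
  - by rewrite (inj_eq perm_inj) eqxx /= nij.
  - by rewrite (inj_eq perm_inj) eqxx orbT eq_sym nij.
  - by rewrite eqxx (negbTE np1) (negbTE np2).
rewrite bigmin2 // ?index_enum_uniq ?mem_index_enum //.
by move=> p; apply: ltnW.
Qed.

Fixpoint lvalid n (k : nat) (x : 'S_n) (ch : lchain n) : Prop :=
  match ch with
  | [::] => True
  | (l, y) :: ch' => kcovers (if l then 1 else k) x y /\ lvalid k y ch'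
  end.

Fixpoint fsv n (x : 'S_n) (ch : lchain n) : seq nat :=
  match ch with
  | [::] => [::]
  | (l, y) :: ch' => if l then fsv y ch' else smallval x y :: fsv y ch'
  end.

Lemma lvalid_cat n k (x : 'S_n) c1 c2 :
  lvalid k x (c1 ++ c2) <-> lvalid k x c1 /\ lvalid k (last x (map snd c1)) c2.
Proof.
elim: c1 x => [|[l y] c1 IH] x /=; first by split => // -[].
rewrite IH; tauto.
Qed.

Lemma fsv_cat n (x : 'S_n) c1 c2 :
  fsv x (c1 ++ c2) = fsv x c1 ++ fsv (last x (map snd c1)) c2.
Proof. by elim: c1 x => [|[[] y] c1 IH] x //=; rewrite IH. Qed.

Lemma kcov_sv n k (a b : 'S_n) : kcovers k a b ->
  exists i j : 'I_n, [/\ i < j, i < k <= j, b = swp a i j, ell b = (ell a).+1 &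
     a i < a j /\ smallval a b = a i].
Proof.
move=> [i [j [lij hk eb el]]]; exists i, j; split => //; split.
- by move: el; rewrite eb; apply: cover_lt.
- rewrite eb smallval_swp; last by apply/eqP => e; move: lij; rewrite e ltnn.
  have : a i < a j by move: el; rewrite eb; apply: cover_lt.
  lia.
Qed.

Lemma L_second n k (a b' c : 'S_n) (P Q P2 Q2 : 'I_n) :
  P < Q -> P2 < Q2 -> a P < a Q -> b' P2 < b' Q2 -> nat_of_ord P = 0 -> P2 < k <= Q2 ->
  b' = swp a P Q -> c = swp b' P2 Q2 -> ell c = (ell a).+2 ->
  covers a b' /\ covers b' c /\ kcovers 1 a b' /\ kcovers k b' c.
Proof.
move=> lPQ lP2 aPQ bPQ P0 hk eb' ec el.
have e1 : ell a < ell b' by rewrite eb'; apply: ell_inc.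
have e2 : ell b' < ell c by rewrite ec; apply: ell_inc.
have h1 : ell b' = (ell a).+1 by lia.
have h2 : ell c = (ell b').+1 by lia.
split; first by exists P, Q.
split; first by exists P2, Q2.
split; first by exists P, Q; split => //; rewrite P0 /=; lia.
by exists P2, Q2.
Qed.

Lemma L_first n k (a b2 c : 'S_n) :
  kcovers 1 a b2 -> kcovers k b2 c -> ell c = (ell a).+2 ->
  exists o q p r : 'I_n, [/\ nat_of_ord o = 0, o < q, p < k <= r, b2 = swp a o q &
     [/\ c = swp b2 p r, c r != a r & smallval b2 c = a (tperm o q p)]].
Proof.
move=> /kcov_sv [o [q [loq ho eb2 el1 [aoq sv1]]]] /kcov_sv [p [r [lpr hk ec el2 [bpr sv2]]]] el.
have o0 : nat_of_ord o = 0 by lia.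
exists o, q, p, r; split => //; split => //.
- apply/eqP; rewrite ec eb2 !swpE tpermR => /perm_inj.
  case: (tpermP o q p) => [po|pq|po pq] e.
  + subst p q; move: el; rewrite ec eb2 swpK; lia.
  + subst; lia.
  + subst; lia.
- by rewrite sv2 eb2 swpE.
Qed.

Definition Hmove n k (a b c b2 : 'S_n) : Prop :=
  (b2 != b /\ covers a b2 /\ covers b2 c /\ kcovers 1 a b2 /\ kcovers k b2 c) \/
  (b2 = b /\ forall b' : 'S_n, b' != b -> covers a b' -> covers b' c ->
      ~ (kcovers 1 a b' /\ kcovers k b' c)).

Lemma local_move n k (a b c b2 : 'S_n) :
  0 < k -> kcovers k a b -> kcovers 1 b c -> Hmove k a b c b2 ->
  kcovers 1 a b2 /\ kcovers k b2 c /\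
  ( smallval b2 c = smallval a b
  \/ (exists o : 'I_n, [/\ nat_of_ord o = 0, smallval a b < smallval b2 c,
        smallval b2 c < c o &
        forall m : 'I_n, m < k -> c m < smallval b2 c -> c m < smallval a b])
  \/ (exists o j : 'I_n, [/\ nat_of_ord o = 0, k <= j, smallval b2 c < smallval a b,
        nat_of_ord (a o) = smallval b2 c &
        [/\ nat_of_ord (c o) = smallval a b, nat_of_ord (c j) = smallval b2 c, smallval a b < a j,
            (forall m : 'I_n, k <= m -> m != j -> nat_of_ord (c m) = a m) &
            (forall m : 'I_n, 0 < m < j -> smallval b2 c < a m -> a m < smallval a b -> False)]])).
Proof.
move=> k0 /kcov_sv [i [j [lij hk eb el [aij svab]]]].
move=> /kcov_sv [o [j' [loj ho ec el2 [boj svbc]]]] Hm.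
have o0 : nat_of_ord o = 0 by lia.
have elc : ell c = (ell a).+2 by lia.
have cE : forall m, c m = a (tperm i j (tperm o j' m)) by move=> m; rewrite ec eb !swpE.
have bE : forall m, b m = a (tperm i j m) by move=> m; rewrite eb swpE.
rewrite svab.
case: Hm => [[nb2 [_ [_ [k1 k2]]]] | [eb2 Hno]].
-
  split => //; split => //.
  have [o2 [q [p [r [o20 loq hpr eb2 [ec2 cra sv2]]]]]] := L_first k1 k2 elc.
  have oo : o2 = o by apply: ord_inj; lia.
  subst o2; rewrite sv2.
  have crv : c r = a (tperm o q p) by rewrite ec2 eb2 !swpE tpermR.
  have cE2 : forall m, c m = a (tperm o q (tperm p r m)) by move=> m; rewrite ec2 eb2 !swpE.
  have [eio|nio] := eqVneq i o.
  + subst i; case: (leqP k j') => hj'.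
    * exfalso.
      have nj'j : j' != j.
        apply/eqP => e; subst j'; move: boj; rewrite !bE tpermL tpermR; lia.
      move/eqP: nj'j => nj'j.
      have rjj : (r == j) || (r == j').
        apply/negPn/negP; rewrite negb_or => /andP [/eqP h1 /eqP h2].
        move/eqP: cra; apply; rewrite cE; congr (a _); tpsolve.
      case/orP: rjj => /eqP er; subst r.
      - have h1 : tperm o q p = o.
          by apply: (@perm_inj _ a); rewrite -crv cE; congr (a _); tpsolve.
        have pq : p = q by move: h1; tpsolve.
        subst p.
        have h2 : tperm o j (tperm o j' o) = tperm o q (tperm q j o).
          by apply: (@perm_inj _ a); rewrite -cE -cE2.
        move: h2; tpsolve.
      - have h1 : tperm o q p = j.
          by apply: (@perm_inj _ a); rewrite -crv cE; congr (a _); tpsolve.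
        move: h1; case: (tpermP o q p) => [po|pq|po pq] e.
        + by subst; move: nb2; rewrite eqxx.
        + subst; lia.
        + subst; lia.
    * left; rewrite -crv cE; congr (a _).
      have rj : r = j.
        apply/eqP; apply/negPn/negP => /eqP nrj.
        move/eqP: cra; apply; rewrite cE; congr (a _); tpsolve.
      subst r; tpsolve.
  + move/eqP: nio => nio.
    have [e1|n1] := eqVneq j' i; last move/eqP: n1 => n1;
      [| have [e2|n2] := eqVneq j' j; last move/eqP: n2 => n2].
    *
      subst j'; left.
      have rj : r = j.
        apply/eqP; apply/negPn/negP => /eqP nrj.
        move/eqP: cra; apply; rewrite cE; congr (a _); tpsolve.
      subst r; rewrite -crv cE; congr (a _); tpsolve.
    *
      subst j'; right; right.
      have rj : r = j.
        apply/eqP; apply/negPn/negP => /eqP nrj.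
        move/eqP: cra; apply; rewrite cE; congr (a _); tpsolve.
      subst r.
      have xv : a (tperm o q p) = a o by rewrite -crv cE; congr (a _); tpsolve.
      rewrite xv.
      have boa : b o = a o by rewrite bE; congr (a _); tpsolve.
      have bja : b j = a i by rewrite bE tpermR.
      exists o, j; split => //; first by case/andP: hk.
      - by move: boj; rewrite boa bja.
      - split => //.
        + by rewrite cE; congr (nat_of_ord (a _)); tpsolve.
        + by rewrite crv xv.
        + by move=> m hm nmj; rewrite cE; congr (nat_of_ord (a _)); move/eqP: nmj => nmj; tpsolve.
        + move=> m /andP [m0 mj] h1 h2.
          have [emi|nmi] := eqVneq m i; first by subst m; lia.
          have bm : b m = a m by rewrite bE; congr (a _); move/eqP: nmi => nmi; tpsolve.
          apply: (cover_noint (a := b) (i := o) (j := j) (m := m)) => //.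
          - by rewrite -ec.
          - by rewrite o0.
          - by rewrite boa bm.
          - by rewrite bm bja.
    *
      have rjj : (r == j) || (r == j').
        apply/negPn/negP; rewrite negb_or => /andP [/eqP h1 /eqP h2].
        move/eqP: cra; apply; rewrite cE; congr (a _); tpsolve.
      case/orP: rjj => /eqP er; subst r.
      - left; rewrite -crv cE; congr (a _); tpsolve.
      - exfalso.
        have h1 : tperm o q p = o.
          by apply: (@perm_inj _ a); rewrite -crv cE; congr (a _); tpsolve.
        have pq : p = q by move: h1; tpsolve.
        subst p.
        have h2 : tperm i j (tperm o j' o) = tperm o q (tperm q j' o).
          by apply: (@perm_inj _ a); rewrite -cE -cE2.
        move: h2; tpsolve.
-
  subst b2.
  have Hb' : forall P Q P2 Q2 : 'I_n, P < Q -> P2 < Q2 -> a P < a Q ->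
      swp a P Q P2 < swp a P Q Q2 -> nat_of_ord P = 0 -> P2 < k <= Q2 ->
      c = swp (swp a P Q) P2 Q2 -> swp a P Q != b -> False.
    move=> P Q P2 Q2 h1 h2 h3 h4 h5 h6 h7 h8.
    have [g1 [g2 [g3 g4]]] := L_second h1 h2 h3 h4 h5 h6 erefl h7 elc.
    exact: (Hno _ h8 g1 g2 (conj g3 g4)).
  have permeq : forall (f g : 'I_n -> 'I_n), (forall m, f m = g m) ->
      forall (d : 'S_n), (forall m, c m = d m) -> (forall m, c m = a (f m)) ->
      (forall m, d m = a (g m)) -> c = d.
    by move=> f g fg d _ hc hd; apply/permP => m; rewrite hc hd fg.
  have [eio|nio] := eqVneq i o.
  + subst i; case: (leqP k j') => hj'.
    *
      split; first by exists o, j; split => //; rewrite o0; lia.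
      split; first by exists o, j'; split => //; rewrite o0; lia.
      right; left; exists o; rewrite svbc.
      have boa : b o = a j by rewrite bE tpermL.
      have cob : c o = b j' by rewrite ec swpE tpermL.
      split => //; first by rewrite boa.
      + by rewrite cob.
      + move=> m mk cm.
        have nmo : m <> o by move=> e; subst m; move: cm; rewrite cob; lia.
        have cma : c m = a m by rewrite cE; congr (a _); tpsolve.
        rewrite cma; rewrite cma boa in cm.
        case: (ltngtP (a m) (a o)) => // h.
        - exfalso; apply: (cover_noint (a := a) (i := o) (j := j) (m := m)) => //.
          + by rewrite -eb.
          + by move/(contra_not (@ord_inj _ _ _)): nmo => nmo; rewrite o0; lia.
          + by case/andP: hk; lia.
        - by move/ord_inj/perm_inj: h.
    *
      exfalso; apply: (Hb' o j' j' j) => //.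
      - by case/andP: hk; lia.
      - have : b o < b j' by [].
        rewrite !bE tpermL (_ : tperm o j j' = j'); last by case/andP: hk => _ ?; tpsolve.
        lia.
      - by rewrite !swpE tpermR (_ : tperm o j' j = j) ?tpermL //; case/andP: hk => _ ?; tpsolve.
      - by case/andP: hk => _ ?; rewrite hj'.
      - apply/permP => m; rewrite cE !swpE; congr (a _); case/andP: hk => _ ?; tpsolve.
      - apply/eqP => e; have := congr1 (fun f : 'S_n => f o) e; rewrite /= bE !swpE tpermL.
        move/perm_inj; case/andP: hk => _ ?; tpsolve.
  + exfalso; move/eqP: nio => nio.
    have oj : o <> j by move=> e; subst; lia.
    have boa : b o = a o by rewrite bE; congr (a _); tpsolve.
    have io : o < i by move/(contra_not (@ord_inj _ _ _)): nio; lia.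
    have [kk1 kk2] : i < k /\ k <= j by case/andP: hk.
    have [e1|n1] := eqVneq j' i; last move/eqP: n1 => n1.
    * subst j'.
      have bia : b i = a j by rewrite bE tpermL.
      case: (ltngtP (a o) (a i)) => h.
      - apply: (Hb' o i o j) => //; try lia.
        + by rewrite !swpE tpermL; rewrite (_ : tperm o i j = j); [lia | tpsolve].
        + apply/permP => m; rewrite cE !swpE; congr (a _); tpsolve.
        + apply/eqP => e; have := congr1 (fun f : 'S_n => f o) e; rewrite /= boa !swpE tpermL.
          by move/perm_inj.
      - apply: (Hb' o j i j) => //; try lia.
        + by move: boj; rewrite boa bia.
        + by rewrite !swpE tpermR (_ : tperm o j i = i); [lia | tpsolve].
        + apply/permP => m; rewrite cE !swpE; congr (a _); tpsolve.
        + apply/eqP => e; have := congr1 (fun f : 'S_n => f o) e; rewrite /= boa !swpE tpermL.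
          by move/perm_inj => e'; apply: oj; rewrite e'.
      - by move/ord_inj/perm_inj: h => h; apply: nio; rewrite h.
    * have [e2|n2] := eqVneq j' j; last move/eqP: n2 => n2.
      - subst j'.
        have bja : b j = a i by rewrite bE tpermR.
        have aoi : a o < a i by move: boj; rewrite boa bja.
        apply: (Hb' o i i j) => //; try lia.
        + by rewrite !swpE tpermR (_ : tperm o i j = j); [lia | tpsolve].
        + apply/permP => m; rewrite cE !swpE; congr (a _); tpsolve.
        + apply/eqP => e; have := congr1 (fun f : 'S_n => f o) e; rewrite /= boa !swpE tpermL.
          by move/perm_inj.
      - have bja : b j' = a j' by rewrite bE; congr (a _); tpsolve.
        apply: (Hb' o j' i j) => //.
        + by move: boj; rewrite boa bja.
        + have t1 : tperm o j' i = i by tpsolve.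
          have t2 : tperm o j' j = j by tpsolve.
          by rewrite !swpE t1 t2.
        + apply/permP => m; rewrite cE !swpE; congr (a _); tpsolve.
        + apply/eqP => e; have := congr1 (fun f : 'S_n => f o) e; rewrite /= boa !swpE tpermL.
          move/perm_inj => e'; subst; lia.
Qed.


Lemma kcov1_o n (a b : 'S_n) (o : 'I_n) : nat_of_ord o = 0 -> kcovers 1 a b ->
  exists j : 'I_n, [/\ o < j, b = swp a o j, a o < a j & smallval a b = a o].
Proof.
move=> o0 /kcov_sv [o' [j [lij hk eb el [aij sv]]]].
have oo : o' = o by apply: ord_inj; lia.
by subst o'; exists j.
Qed.

Lemma Rpre n k (u : 'S_n) (o : 'I_n) pre l s : nat_of_ord o = 0 -> 0 < k ->
  lvalid k u pre -> fsv u pre = rcons l s ->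
  s <= last u (map snd pre) o \/
  exists j1 : 'I_n, k <= j1 /\ nat_of_ord (last u (map snd pre) j1) = s.
Proof.
move=> o0 k0; elim/last_ind: pre l s => [|pre [lab y] IH] l s /=.
  by move=> _; case: l.
rewrite -cats1 lvalid_cat fsv_cat map_cat last_cat /= => -[v1 [v2 _]].
case: lab v2 => /= v2.
- rewrite cats0 => /(IH _ _ v1) [h|[j1 [kj1 h]]].
  + have [j [loj ey aoj _]] := kcov1_o o0 v2.
    left; rewrite ey swpE tpermL; lia.
  + have [j [loj ey aoj _]] := kcov1_o o0 v2.
    have [e|ne] := eqVneq j1 j.
    * subst j1; left; rewrite ey swpE tpermL; lia.
    * right; exists j1; split => //; rewrite ey swpE -h; congr (nat_of_ord (last u _ _)).
      move/eqP: ne => ne; tpsolve.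
- move=> e; have := congr1 (last 0) e; rewrite last_cat last_rcons /= => <-.
  have [i [j [lij hk ey el [aij sv]]]] := kcov_sv v2.
  right; exists j; split; first by case/andP: hk.
  by rewrite sv ey swpE tpermR.
Qed.

Lemma tailfinal n k (cur : 'S_n) (o j j1 : 'I_n) (z : nat) post :
  nat_of_ord o = 0 -> 0 < k -> k <= j -> k <= j1 -> lvalid k cur post ->
  all (fun s => z < s) (fsv cur post) -> z < cur o -> cur j <= z -> z < cur j1 ->
  last cur (map snd post) j <= z /\ z < last cur (map snd post) j1.
Proof.
move=> o0 k0 kj kj1; elim: post cur => [|[lab y] post IH] cur //=.
move=> [v1 v2]; case: lab v1 => v1 /=.
- move=> hall hzo hj hj1.
  have [q [loq ey aoq _]] := kcov1_o o0 v1.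
  apply: IH => //; rewrite ey swpE.
  + rewrite tpermL; lia.
  + have nqj : q <> j by move=> e; subst q; lia.
    have -> : tperm o q j = j by tpsolve.
    done.
  + case: (tpermP o q j1) => [e|e|e1 e2]; try lia.
- move=> /andP [hs hall] hzo hj hj1.
  have [i [p [lip hk ey el [aip sv]]]] := kcov_sv v1.
  rewrite sv in hs.
  apply: IH => //; rewrite ey swpE.
  + case: (tpermP i p o) => [e|e|e1 e2]; lia.
  + case: (tpermP i p j) => [e|e|e1 e2]; subst; lia.
  + case: (tpermP i p j1) => [e|e|e1 e2]; subst; lia.
Qed.


Lemma UBlem n k (cur : 'S_n) (o : 'I_n) (x y : nat) post :
  nat_of_ord o = 0 -> 0 < k -> lvalid k cur post ->
  pairwise leq (fsv cur post) -> all (leq x) (fsv cur post) -> y < cur o ->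
  (forall m : 'I_n, m < k -> cur m < y -> cur m < x) -> all (leq y) (fsv cur post).
Proof.
move=> o0 k0; elim: post cur => [|[lab y1] post IH] cur //=.
move=> [v1 v2]; case: lab v1 => v1 /=.
- move=> pw hall hyo htop.
  have [q [loq ey aoq _]] := kcov1_o o0 v1.
  apply: IH => //; rewrite ey.
  + rewrite swpE tpermL; lia.
  + move=> m mk; rewrite swpE.
    case: (tpermP o q m) => [e|e|e1 e2].
    * subst m; lia.
    * subst m; lia.
    * by apply: htop.
- move=> /andP [pa pw] /andP [hs hall] hyo htop.
  have [i [p [lip hk ey el [aip sv]]]] := kcov_sv v1.
  rewrite sv in hs pa *.
  have hiy : y <= cur i.
    rewrite leqNgt; apply/negP => h.
    have := htop i (ltac:(by case/andP: hk)) h; lia.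
  rewrite hiy /=.
  by apply/allP => s hs'; apply: leq_trans hiy _; move/allP: pa => /(_ s hs').
Qed.


Definition Inv n k (u w : 'S_n) (ch : lchain n) :=
  lvalid k u ch /\ sorted leq (fsv u ch) /\ last u (map snd ch) = w.

Lemma pres n k (u w : 'S_n) ch ch' : 0 < k -> dec_tail k w ->
  gd_move k 1 u ch ch' -> Inv k u w ch -> Inv k u w ch'.
Proof.
move=> k0 dt [] pre post b c b2 h1 h2 h3 [v [so la]].
set a := last u (map snd pre) in h1 h2 h3.
have [k1 [k2 D]] := local_move k0 h1 h2 h3.
rewrite /Inv; move: v so la; rewrite !lvalid_cat !fsv_cat !map_cat !last_cat /= -/a.
move=> [vp [_ [_ vpost]]] so la.
split; first by split.
split; last by [].
rewrite !(sorted_pairwise leq_trans) in so *.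
have [i [j0 [lij hk eb el [aij svab]]]] := kcov_sv h1.
move: so; rewrite !pairwise_cat !allrel_consr /= => /and4P [/andP [aP aPQ] pwP aQ pwQ].
have [Hpre Hpost] : all (fun s => s <= smallval b2 c) (fsv u pre) /\ all (leq (smallval b2 c)) (fsv c post).
  case: D => [e|[[o [o0 hxx hxo htop]]|[o [j [o0 kj hx'x aox [cox cjx xaj cma noint]]]]]].
  - by rewrite e.
  - split; first by apply/allP => s /(allP aP) /=; lia.
    exact: (UBlem (x := smallval a b) o0 k0 vpost pwQ aQ hxo htop).
  - split; last by apply/allP => s /(allP aQ) /=; lia.
    have [PE|[l [s PE]]] : fsv u pre = [::] \/ exists l s, fsv u pre = rcons l s.
      by case/lastP: (fsv u pre) => [|l s]; [left | right; exists l, s].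
      by rewrite PE.
    move: aP pwP; rewrite PE pairwise_rcons all_rcons => /andP [sx _] /andP [als _].
    suff sx' : s <= smallval b2 c.
      by rewrite all_rcons sx' /=; apply/allP => t /(allP als) /= ts; apply: leq_trans ts sx'.
    case: (Rpre o0 k0 vp PE); rewrite -/a; first by rewrite aox.
    move=> [j1 [kj1 aj1]].
    rewrite leqNgt; apply/negP => hlt.
    have sneq : s != smallval a b.
      apply/eqP => e; have : nat_of_ord (a j1) = a i by rewrite aj1 e svab.
      move/ord_inj/perm_inj => e2; subst; case/andP: hk; lia.
    have j1j : j1 <> j by move=> e; subst j1; lia.
    have jj1 : j < j1.
      case: (ltngtP j j1) => // h.
      - exfalso; apply: (noint j1); lia.
      - by exfalso; apply: j1j; apply: ord_inj.
    have cj1 : nat_of_ord (c j1) = s by rewrite cma //; apply/eqP.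
    have [g1 g2] := tailfinal (z := smallval b2 c) o0 k0 kj kj1 vpost
      (ltac:(by apply/allP => t /(allP aQ) /=; lia)) (ltac:(lia)) (ltac:(lia)) (ltac:(lia)).
    move: g1 g2; rewrite la => g1 g2.
    have := dt j j1 kj jj1; lia.
apply/and4P; split => //; apply/andP; split => //.
Qed.


Lemma lvalid_lab n k (x : 'S_n) (lab : bool) (s : seq 'S_n) :
  sat_kchain (if lab then 1 else k) x s -> lvalid k x [seq (lab, y) | y <- s].
Proof. by elim: s x => [|y s IH] x //= [h1 h2]; split => //; apply: IH. Qed.

Lemma map_snd_lab n (lab : bool) (s : seq 'S_n) : map snd [seq (lab, y) | y <- s] = s.
Proof. by elim: s => [|y s IH] //=; rewrite IH. Qed.

Lemma fsv_false n (x : 'S_n) (s : seq 'S_n) : fsv x [seq (false, y) | y <- s] = step_vals x s.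
Proof. by elim: s x => [|y s IH] x //=; rewrite IH. Qed.

Lemma fsv_true n (x : 'S_n) (s : seq 'S_n) : fsv x [seq (true, y) | y <- s] = [::].
Proof. by elim: s x => [|y s IH] x //=. Qed.

Lemma lab_eq n (lab : bool) (ch : lchain n) : (forall p, p \in ch -> p.1 = lab) ->
  ch = [seq (lab, y) | y <- map snd ch].
Proof.
elim: ch => [|[l y] ch IH] //= h.
rewrite -IH; last by move=> p hp; apply: h; rewrite inE hp orbT.
by have := h (l, y); rewrite inE eqxx /= => ->.
Qed.

Lemma lvalid_sat n k (x : 'S_n) (lab : bool) (s : seq 'S_n) :
  lvalid k x [seq (lab, y) | y <- s] -> sat_kchain (if lab then 1 else k) x s.
Proof. by elim: s x => [|y s IH] x //= [h1 h2]; split => //; apply: IH. Qed.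

Lemma one_incr n (x : 'S_n) s : sat_kchain 1 x s -> sorted ltn (step_vals x s).
Proof.
elim: s x => [|y s IH] x //= [h1 h2].
case: s IH h2 => [|z s] IH h2 //=.
apply/andP; split; last by apply: (IH y h2).
have [i [j [lij hk ey el [aij sv]]]] := kcov_sv h1.
case: h2 => h3 _.
have [i' [j' [lij' hk' ez el' [aij' sv']]]] := kcov_sv h3.
have ii : i' = i by apply: ord_inj; lia.
subst i'; rewrite sv sv' ey swpE tpermL; done.
Qed.

Lemma k_strict n k (x : 'S_n) s : sat_kchain k x s -> sorted leq (step_vals x s) ->
  sorted ltn (step_vals x s).
Proof.
elim: s x => [|y s IH] x //= [h1 h2].
case: s IH h2 => [|z s] IH h2 //=.
move=> /andP [le hs]; apply/andP; split; last by apply: (IH y h2).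
have [i [j [lij hk ey el [aij sv]]]] := kcov_sv h1.
case: h2 => h3 _.
have [i' [j' [lij' hk' ez el' [aij' sv']]]] := kcov_sv h3.
rewrite ltn_neqAle le andbT sv sv'.
have yj : y j = x i by rewrite ey swpE tpermR.
rewrite -yj (inj_eq (@ord_inj _)) (inj_eq perm_inj).
by apply/eqP => e; subst; lia.
Qed.

Lemma Inv_star n k (u w : 'S_n) ch ch' : 0 < k -> dec_tail k w ->
  clos_refl_trans_1n _ (gd_move k 1 u) ch ch' -> Inv k u w ch -> Inv k u w ch'.
Proof.
move=> k0 dt; elim => [//|x y z hxy _ IH] hx.
by apply: IH; apply: (pres k0 dt hxy hx).
Qed.

Unset Implicit Arguments.
Theorem lemma5p5 (n k : nat) (u : 'S_n) (s1 s2 : seq 'S_n)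
    (s' : lchain n) (m : nat) :
  1 <= k <= n.-1 ->
  dec_tail k (last (last u s1) s2) ->
  incr_kchain k u s1 ->
  incr_kchain 1 (last u s1) s2 ->
  clos_refl_trans_1n _ (gd_move k 1 u) (concat_lchain s1 s2) s' ->
  map fst s' = nseq m true ++ nseq (size s' - m) false ->
  incr_kchain 1 u (map snd (take m s')) /\
  incr_kchain k (last u (map snd (take m s'))) (map snd (drop m s')).
Proof.
move=> /andP [k0 _] dt [sat1 inc1] [sat2 _] hstar hlab.
have I0 : Inv k u (last (last u s1) s2) (concat_lchain s1 s2).
  rewrite /Inv /concat_lchain lvalid_cat fsv_cat map_cat last_cat !map_snd_lab.
  rewrite fsv_false fsv_true cats0; split; last split => //.
  - by split; apply: lvalid_lab.
  - by apply: sub_sorted inc1 => a b /ltnW.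
have [v [so la]] := Inv_star k0 dt hstar I0.
have msz : m <= size s'.
  have := congr1 size hlab; rewrite size_map size_cat !size_nseq; lia.
have hT : forall p, p \in take m s' -> p.1 = true.
  move=> p hp; have : p.1 \in map fst (take m s') by apply: map_f.
  rewrite map_take hlab take_size_cat ?size_nseq // => /nseqP [] //.
have hF : forall p, p \in drop m s' -> p.1 = false.
  move=> p hp; have : p.1 \in map fst (drop m s') by apply: map_f.
  rewrite map_drop hlab drop_size_cat ?size_nseq // => /nseqP [] //.
have eS : s' = take m s' ++ drop m s' by rewrite cat_take_drop.
rewrite eS lvalid_cat fsv_cat in v so.
case: v => v1 v2.
rewrite [in fsv _ (take _ _)](lab_eq hT) [in fsv _ (drop _ _)](lab_eq hF) fsv_true fsv_false /= in so.
rewrite (lab_eq hT) in v1; rewrite (lab_eq hF) in v2.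
have sat1' : sat_kchain 1 u (map snd (take m s')) := lvalid_sat v1.
have sat2' : sat_kchain k (last u (map snd (take m s'))) (map snd (drop m s')) := lvalid_sat v2.
split; split => //.
- exact: one_incr.
- exact: (k_strict sat2' so).
Qed.
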